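(* Let $f,g\in\mathbb B(X)$ with $f$ modular in $g$, and write $s=f_{g/1}$, $t=f_{g/0}$. Then, pointwise on $2^X$ (treating the $\{0,1\}$-valued games as Boolean-valued), $$\omega_f=\omega_g\,\omega_{\overline g}\,(\omega_s\lor\omega_t)\ \lor\ \omega_g\,\overline{\omega_{\overline g}}\,\omega_s\ \lor\ \overline{\omega_g}\,\omega_{\overline g}\,\omega_t\ \lor\ \overline{\omega_g}\,\overline{\omega_{\overline g}}\,\omega_{st}.$$ If moreover $f$ is monotonically modular in $g$, then $\omega_f=\omega_g\,\omega_s\lor\overline{\omega_g}\,\omega_t$.
   Context: $X$ is a fixed finite set of variables. An assignment over $U\subseteq X$ is a map $\mathbf u:U\to\{0,1\}$; $\mathbf u;\mathbf w$ is concatenation of assignments with disjoint domains. $\mathbb B(X)$ is the set of Boolean functions $\{0,1\}^X\to\{0,1\}$, combined pointwise ($st=s\land t$, $\overline f$ negation); $f_{x/c}$ is $f$ with $x$ fixed to $c$; $\mathrm{dep}(f)=\{x:f_{x/1}\ne f_{x/0}\}$; $f[x/s]=s f_{x/1}\lor\overline s f_{x/0}$. Modularity: $f$ is modular in $g$ if $g$ is not constant and there are $\ell\in\mathbb B(X)$, $z\in X$ with $\mathrm{dep}(\ell)\cap\mathrm{dep}(g)=\emptyset$ and $f=\ell[z/g]$; monotonically modular if moreover $\ell_{z/1}\ge\ell_{z/0}$. Then $f_{g/1}:=\ell_{z/1}$ and $f_{g/0}:=\ell_{z/0}$ (well defined). The dominating CGM assigns to $f$ the game $\omega_f:2^X\to\{0,1\}$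 with $\omega_f(S)=1$ iff there is $\mathbf u\in\{0,1\}^S$ with $f(\mathbf u;\mathbf w)=1$ for all $\mathbf w\in\{0,1\}^{X\setminus S}$. *)

(* Defs.v *)
From mathcomp Require Import all_boot.
Set Implicit Arguments. Unset Strict Implicit. Unset Printing Implicit Defensive.

Section BoolFun.
Variable X : finType.

Definition assignment := {ffun X -> bool}.
Definition bfun := assignment -> bool.

Definition band (s t : bfun) : bfun := fun a => s a && t a.
Definition bor (s t : bfun) : bfun := fun a => s a || t a.
Definition bneg (f : bfun) : bfun := fun a => ~~ f a.

Definition upd (a : assignment) (x : X) (c : bool) : assignment :=
  [ffun y => if y == x then c else a y].

Definition cofactor (f : bfun) (x : X) (c : bool) : bfun :=
  fun a => f (upd a x c).

Definition dep (f : bfun) : {set X} :=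
  [set x | [exists a, cofactor f x true a != cofactor f x false a]].

Definition subst (f : bfun) (x : X) (s : bfun) : bfun :=
  bor (band s (cofactor f x true)) (band (bneg s) (cofactor f x false)).

Definition nonconstant (g : bfun) : Prop := exists a b, g a != g b.

Definition modular_wit (f g l : bfun) (z : X) : Prop :=
  [/\ nonconstant g, dep l :&: dep g = set0 & forall a, f a = subst l z g a].

Definition modular (f g : bfun) : Prop := exists l z, modular_wit f g l z.

Definition mono_modular_wit (f g l : bfun) (z : X) : Prop :=
  modular_wit f g l z /\ forall a, cofactor l z false a ==> cofactor l z true a.

Definition mono_modular (f g : bfun) : Prop := exists l z, mono_modular_wit f g l z.

Definition concat (S : {set X}) (u w : assignment) : assignment :=
  [ffun x => if x \in S then u x else w x].

(* dominating CGM: omega_f(S) = 1 iff some u on S forces f to 1 *)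
Definition omega (f : bfun) (S : {set X}) : bool :=
  [exists u : assignment, [forall w : assignment, f (concat S u w)]].

End BoolFun.

(* Main.v *)
Require Import Defs.
From mathcomp Require Import all_boot.

Section Aux.
Variable X : finType.

Lemma agree_seq (h : bfun X) (r : seq X) : forall a b : assignment X,
  (forall x, x \notin r -> a x = b x) -> (forall x, x \in r -> x \notin dep h) ->
  h a = h b.
Proof.
elim: r => [|x r IH] a b Hab Hd.
  by congr h; apply/ffunP => y; apply: Hab.
transitivity (h (upd a x (b x))).
  have : x \notin dep h by apply: Hd; rewrite mem_head.
  rewrite /dep inE negb_exists => /forallP /(_ a); rewrite negbK /cofactor => /eqP E.
  have Ha: upd a x (a x) = a by apply/ffunP => y; rewrite ffunE; case: eqP => // ->.
  rewrite -{1}Ha.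
  by case: (a x); case: (b x); rewrite ?E.
apply: IH.
  move=> y Hy; rewrite ffunE; case: eqP => [->|ne] //; apply: Hab.
  by rewrite in_cons negb_or Hy andbT; apply/eqP.
by move=> y Hy; apply: Hd; rewrite in_cons Hy orbT.
Qed.

Lemma dep_agree (h : bfun X) (a b : assignment X) :
  (forall x, x \in dep h -> a x = b x) -> h a = h b.
Proof.
move=> H; apply: (@agree_seq h (enum (~: dep h))).
  by move=> x; rewrite mem_enum inE negbK; apply: H.
by move=> x; rewrite mem_enum inE.
Qed.

Lemma cof_agree (l : bfun X) z c (A : {set X}) : dep l :&: A = set0 ->
  forall a b : assignment X, (forall x, x \notin A -> a x = b x) ->
  cofactor l z c a = cofactor l z c b.
Proof.
move=> D a b H; rewrite /cofactor; apply: dep_agree => y Hy; rewrite !ffunE; case: eqP => // _.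
apply: H; apply/negP => yA.
have : y \in dep l :&: A by rewrite inE Hy yA.
by rewrite D inE.
Qed.

End Aux.

Theorem mainTheorem13 (X : finType) (f g l : bfun X) (z : X) :
  modular_wit f g l z ->
  let s := cofactor l z true in
  let t := cofactor l z false in
  (forall S : {set X},
     omega f S =
     [|| [&& omega g S, omega (bneg g) S & omega s S || omega t S],
         [&& omega g S, ~~ omega (bneg g) S & omega s S],
         [&& ~~ omega g S, omega (bneg g) S & omega t S]
       | [&& ~~ omega g S, ~~ omega (bneg g) S & omega (band s t) S]]) /\
  (mono_modular_wit f g l z ->
   forall S : {set X},
     omega f S = (omega g S && omega s S) || (~~ omega g S && omega t S)).
Proof.
move=> [_ D Hf] s t.
have fE : forall a, f a = if g a then s a else t a.
  by move=> a; rewrite Hf /subst /bor /band /bneg; case: (g a); rewrite ?orbF.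
have gA : forall a b : assignment X, (forall x, x \in dep g -> a x = b x) -> g a = g b.
  by move=> a b; apply: dep_agree.
have cA : forall c (a b : assignment X), (forall x, x \notin dep g -> a x = b x) ->
    cofactor l z c a = cofactor l z c b.
  by move=> c; apply: cof_agree.
have L2 : forall (b : bool) S (u1 u2 : assignment X),
    (forall w, g (concat S u1 w) = b) -> (forall w, cofactor l z b (concat S u2 w)) ->
    forall w, f (concat S (concat (dep g) u1 u2) w).
  move=> b S u1 u2 H1 H2 w; rewrite fE.
  have -> : g (concat S (concat (dep g) u1 u2) w) = b.
    rewrite -(H1 w); apply: gA => x xA; by rewrite !ffunE xA.
  have E : cofactor l z b (concat S (concat (dep g) u1 u2) w) =
            cofactor l z b (concat S u2 w).
    apply: cA => x xA; by rewrite !ffunE (negbTE xA).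
  by case: b H1 H2 E => _ /(_ w) H2 E; rewrite /= /s /t E.
have L1 : forall (b : bool) S (u w0 : assignment X),
    (forall w, f (concat S u w)) -> g (concat S u w0) = b ->
    forall w, cofactor l z b (concat S u w).
  move=> b S u w0 Hu Hg w.
  have := Hu (concat (dep g) w0 w); rewrite fE.
  have -> : g (concat S u (concat (dep g) w0 w)) = b.
    rewrite -Hg; apply: gA => x xA; by rewrite !ffunE xA.
  have E : cofactor l z b (concat S u (concat (dep g) w0 w)) =
            cofactor l z b (concat S u w).
    apply: cA => x xA; by rewrite !ffunE (negbTE xA).
  by case: b Hg E => _ E; rewrite /= /s /t E.
have main : forall S,
  [&& (omega g S && omega s S) ==> omega f S,
      (omega (bneg g) S && omega t S) ==> omega f S,
      omega (band s t) S ==> omega f S,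
      omega (band s t) S ==> omega s S,
      omega (band s t) S ==> omega t S,
      omega f S ==> (~~ omega (bneg g) S ==> omega s S),
      omega f S ==> (~~ omega g S ==> omega t S),
      omega f S ==> (omega s S || omega t S) &
      omega f S ==> (~~ omega g S ==> ~~ omega (bneg g) S ==> omega (band s t) S)].
  move=> S; rewrite /omega.
  (repeat (apply/andP; split)); apply/implyP.
  - case/andP => /existsP [u1 /forallP H1] /existsP [u2 /forallP H2].
    apply/existsP; exists (concat (dep g) u1 u2); apply/forallP.
    by apply: (L2 true) => // w; apply: H1.
  - case/andP => /existsP [u1 /forallP H1] /existsP [u2 /forallP H2].
    apply/existsP; exists (concat (dep g) u1 u2); apply/forallP.
    apply: (L2 false) => // w; by have := H1 w; rewrite /bneg; case: (g _).
  - case/existsP => u /forallP H; apply/existsP; exists u; apply/forallP => w.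
    by rewrite fE; have := H w; rewrite /band; case/andP => -> ->; case: (g _).
  - case/existsP => u /forallP H; apply/existsP; exists u; apply/forallP => w.
    by have := H w; case/andP.
  - case/existsP => u /forallP H; apply/existsP; exists u; apply/forallP => w.
    by have := H w; case/andP.
  - case/existsP => u /forallP H; apply/implyP; rewrite negb_exists => /forallP /(_ u).
    rewrite negb_forall => /existsP [w0]; rewrite /bneg negbK => Hg.
    apply/existsP; exists u; apply/forallP; move=> w; exact: (L1 true S u w0 H Hg w).
  - case/existsP => u /forallP H; apply/implyP; rewrite negb_exists => /forallP /(_ u).
    rewrite negb_forall => /existsP [w0] Hg.
    apply/existsP; exists u; apply/forallP; apply: (L1 false S u w0 H).
    by apply/negbTE.
  - case/existsP => u /forallP H.
    case Hg: (g (concat S u u)).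
      by apply/orP; left; apply/existsP; exists u; apply/forallP; apply: (L1 true S u u H Hg).
    by apply/orP; right; apply/existsP; exists u; apply/forallP; apply: (L1 false S u u H Hg).
  - case/existsP => u /forallP H; apply/implyP; rewrite negb_exists => /forallP /(_ u).
    rewrite negb_forall => /existsP [w0] Hg0; apply/implyP.
    rewrite negb_exists => /forallP /(_ u).
    rewrite negb_forall => /existsP [w1]; rewrite /bneg negbK => Hg1.
    apply/existsP; exists u; apply/forallP => w; rewrite /band.
    by rewrite /s /t (L1 true S u w1 H Hg1) (L1 false S u w0 H (negbTE Hg0)).
have part1 : forall S,
     omega f S =
     [|| [&& omega g S, omega (bneg g) S & omega s S || omega t S],
         [&& omega g S, ~~ omega (bneg g) S & omega s S],
         [&& ~~ omega g S, omega (bneg g) S & omega t S]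
       | [&& ~~ omega g S, ~~ omega (bneg g) S & omega (band s t) S]].
  move=> S; move: (main S).
  case: (omega f S); case: (omega g S); case: (omega (bneg g) S);
  case: (omega s S); case: (omega t S); by case: (omega (band s t) S).
split => // [[_ Hm]] S; rewrite part1.
have : omega t S ==> omega (band s t) S.
  apply/implyP => /existsP [u /forallP H]; apply/existsP; exists u; apply/forallP => w.
  by rewrite /band; have := H w; have := Hm (concat S u w); rewrite /s /t => /implyP P Ht; rewrite Ht (P Ht).
have : omega t S ==> omega s S.
  apply/implyP => /existsP [u /forallP H]; apply/existsP; exists u; apply/forallP => w.
  by have := Hm (concat S u w); rewrite /s /t => /implyP P; apply: P; apply: H.
have := main S.
case: (omega f S); case: (omega g S); case: (omega (bneg g) S);
case: (omega s S); case: (omega t S); by case: (omega (band s t) S).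
Qed.
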